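(* Let $G$ be a graph with $n\ge 2$ vertices, $m$ edges and minimum degree $\delta$. Then $$EE(G) \ge e^{\frac{2(m-\delta)}{n-1}} + (n-1) - \frac{2(m-\delta)}{n-1},$$ with equality if and only if $G$ is isomorphic to the edgeless graph $\overline{K_n}$.
   Context: All graphs are finite, simple and undirected. For a graph $G$ with adjacency matrix $A(G)$ having eigenvalues $\lambda_1\ge\cdots\ge\lambda_n$, the Estrada index is $EE(G)=\sum_{i=1}^n e^{\lambda_i}$. $\overline{K_n}$ denotes the graph on $n$ vertices with no edges. *)

(* Defs.v *)
From Stdlib Require Import Reals Lra Lia Arith.
Open Scope R_scope.

(* A graph on n vertices is encoded by vertices 0..n-1 and a boolean
   adjacency relation adj; only its values on 0..n-1 matter. *)

Fixpoint sumR (k : nat) (f : nat -> R) : R :=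
  match k with
  | O => 0
  | S k' => sumR k' f + f k'
  end.

Fixpoint sumN (k : nat) (f : nat -> nat) : nat :=
  match k with
  | O => 0%nat
  | S k' => (sumN k' f + f k')%nat
  end.

Fixpoint minN (k : nat) (f : nat -> nat) : nat :=
  match k with
  | O => f 0%nat
  | S k' => Nat.min (minN k' f) (f k)
  end.

Definition b2n (b : bool) : nat := if b then 1%nat else 0%nat.

Definition degree (n : nat) (adj : nat -> nat -> bool) (i : nat) : nat :=
  sumN n (fun j => b2n (adj i j)).

Definition num_edges (n : nat) (adj : nat -> nat -> bool) : nat :=
  sumN n (fun i => sumN i (fun j => b2n (adj i j))).

(* minimum degree (for n >= 1) *)
Definition min_degree (n : nat) (adj : nat -> nat -> bool) : nat :=
  minN (n - 1) (degree n adj).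

Definition adj_matrix (adj : nat -> nat -> bool) (i j : nat) : R :=
  if adj i j then 1 else 0.

(* lam 0, ..., lam (n-1) is the spectrum (eigenvalues with multiplicity) of
   the real symmetric n x n matrix A: there is an orthonormal basis
   v 0, ..., v (n-1) of R^n with A (v k) = lam k * v k. *)
Definition is_spectrum (n : nat) (A : nat -> nat -> R) (lam : nat -> R) : Prop :=
  exists v : nat -> nat -> R,
    (forall k l, (k < n)%nat -> (l < n)%nat ->
       sumR n (fun i => v k i * v l i) = if Nat.eqb k l then 1 else 0) /\
    (forall k i, (k < n)%nat -> (i < n)%nat ->
       sumR n (fun j => A i j * v k j) = lam k * v k i).

Definition estrada (n : nat) (lam : nat -> R) : R :=
  sumR n (fun k => exp (lam k)).

(* Main.v *)
Require Import Defs.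
From Stdlib Require Import Reals Lra Lia Arith.
From mathcomp Require ssreflect ssrbool ssrnat eqtype fintype bigop ssralg matrix.
From mathcomp Require Rstruct.
Open Scope R_scope.

Module MC.
Import ssreflect ssrbool eqtype ssrnat fintype bigop ssralg matrix Rstruct.
Import GRing.Theory.

Lemma sumR_big (k : nat) (f : nat -> R) :
  sumR k f = (\sum_(i < k) f (nat_of_ord i))%R.
Proof.
elim: k => [|k IH]; first by rewrite big_ord0.
by rewrite big_ord_recr /= IH.
Qed.

Lemma complete_on (n : nat) (v : nat -> nat -> R) :
  (forall k l, (k < n)%coq_nat -> (l < n)%coq_nat ->
     sumR n (fun i => Rmult (v k i) (v l i)) = if Nat.eqb k l then IZR 1 else IZR 0) ->
  forall i j, (i < n)%coq_nat -> (j < n)%coq_nat ->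
     sumR n (fun k => Rmult (v k i) (v k j)) = if Nat.eqb i j then IZR 1 else IZR 0.
Proof.
move=> H i j Hi Hj.
pose M : 'M[R]_n := (\matrix_(k < n, l < n) v k l)%R.
have H1 : (M *m M^T = 1%:M)%R.
  apply/matrixP => k l; rewrite !mxE.
  have := H k l (ltP (ltn_ord k)) (ltP (ltn_ord l)).
  rewrite sumR_big => E.
  transitivity (if Nat.eqb k l then IZR 1 else IZR 0).
    rewrite -E; apply: eq_bigr => x _; by rewrite !mxE.
  case: (Nat.eqb_spec k l) => [/val_inj ->|kl]; first by rewrite eqxx.
  by case: eqP => // E'; case: kl; rewrite E'.
have H2 := mulmx1C H1.
have /matrixP /(_ (Ordinal (introT ltP Hi)) (Ordinal (introT ltP Hj))) := H2.
rewrite !mxE sumR_big => E.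
transitivity ((((Ordinal (introT ltP Hi)) == (Ordinal (introT ltP Hj)))%:R : R))%R.
  rewrite -E; apply: eq_bigr => k _; by rewrite !mxE.
case: (Nat.eqb_spec i j) => [ij|ij].
  by rewrite (_ : Ordinal (introT ltP Hi) = Ordinal (introT ltP Hj)) ?eqxx //; apply: val_inj.
by case: eqP => // -[].
Qed.
End MC.

Lemma sumR_ext k f g : (forall i, (i < k)%nat -> f i = g i) -> sumR k f = sumR k g.
Proof.
  induction k; simpl; intros H; auto.
  rewrite IHk by (intros; apply H; lia). rewrite H by lia. reflexivity.
Qed.

Lemma sumR_S k f : sumR (S k) f = sumR k f + f k.
Proof. reflexivity. Qed.

Lemma sumR_plus k f g : sumR k (fun i => f i + g i) = sumR k f + sumR k g.
Proof. induction k; simpl; [lra | rewrite IHk; lra]. Qed.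

Lemma sumR_scal k c f : sumR k (fun i => c * f i) = c * sumR k f.
Proof. induction k; simpl; [ring | rewrite IHk; ring]. Qed.

Lemma sumR_mulr k c f : sumR k (fun i => f i * c) = sumR k f * c.
Proof. induction k; simpl; [ring | rewrite IHk; ring]. Qed.

Lemma sumR_0 k : sumR k (fun _ => 0) = 0.
Proof. induction k; simpl; [ring | rewrite IHk; ring]. Qed.

Lemma sumR_1 k : sumR k (fun _ => 1) = INR k.
Proof. induction k; simpl sumR; [simpl; ring | rewrite IHk, S_INR; ring]. Qed.

Lemma sumR_le k f g : (forall i, (i < k)%nat -> f i <= g i) -> sumR k f <= sumR k g.
Proof.
  induction k; simpl; intros H; [lra|].
  assert (sumR k f <= sumR k g) by (apply IHk; intros; apply H; lia).
  assert (f k <= g k) by (apply H; lia). lra.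
Qed.

Lemma sumR_nonneg k f : (forall i, (i < k)%nat -> 0 <= f i) -> 0 <= sumR k f.
Proof.
  intros H. apply Rle_trans with (sumR k (fun _ => 0)).
  - rewrite sumR_0; lra.
  - apply sumR_le; auto.
Qed.

Lemma sumR_swap k l f :
  sumR k (fun i => sumR l (fun j => f i j)) = sumR l (fun j => sumR k (fun i => f i j)).
Proof.
  induction k; simpl.
  - symmetry; apply sumR_0.
  - rewrite IHk. rewrite <- sumR_plus. reflexivity.
Qed.

Lemma sumR_delta k i f : (i < k)%nat ->
  sumR k (fun j => if Nat.eqb j i then f j else 0) = f i.
Proof.
  induction k; intros H; [lia|]. simpl.
  destruct (Nat.eq_dec i k) as [->|ne].
  - rewrite Nat.eqb_refl.
    rewrite (sumR_ext k _ (fun _ => 0)).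
    + rewrite sumR_0; ring.
    + intros j Hj. destruct (Nat.eqb_spec j k); [lia|auto].
  - rewrite IHk by lia. destruct (Nat.eqb_spec k i); [lia|ring].
Qed.

Lemma sumR_split k p f : (p < k)%nat ->
  sumR k f = f p + sumR k (fun i => if Nat.eqb i p then 0 else f i).
Proof.
  intros H.
  rewrite <- (sumR_delta k p f H).
  rewrite <- sumR_plus. apply sumR_ext. intros i _.
  destruct (Nat.eqb i p); ring.
Qed.

Lemma sumR_ge0_eq0 k f : (forall i, (i < k)%nat -> 0 <= f i) -> sumR k f = 0 ->
  forall i, (i < k)%nat -> f i = 0.
Proof.
  induction k; intros H E i Hi; [lia|]. simpl in E.
  assert (0 <= sumR k f).
  { rewrite <- (sumR_0 k). apply sumR_le. intros; apply H; lia. }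
  assert (0 <= f k) by (apply H; lia).
  destruct (Nat.eq_dec i k) as [->|ne]; [lra|].
  apply IHk; [intros; apply H; lia | lra | lia].
Qed.

Lemma argmax_ex (n : nat) (g : nat -> R) : (1 <= n)%nat ->
  exists p, (p < n)%nat /\ forall k, (k < n)%nat -> g k <= g p.
Proof.
  induction n; intros H; [lia|].
  destruct (Nat.eq_dec n 0) as [->|ne].
  - exists 0%nat. split; [lia|]. intros k Hk. assert (k = 0%nat) by lia. subst; lra.
  - destruct IHn as [p [Hp Hm]]; [lia|].
    destruct (Rle_dec (g n) (g p)).
    + exists p. split; [lia|]. intros k Hk.
      destruct (Nat.eq_dec k n) as [->|]; [lra| apply Hm; lia].
    + exists n. split; [lia|]. intros k Hk.
      destruct (Nat.eq_dec k n) as [->|]; [lra|]. specialize (Hm k ltac:(lia)). lra.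
Qed.

Lemma minN_ex k f : exists p, (p <= k)%nat /\ minN k f = f p.
Proof.
  induction k; simpl.
  - exists 0%nat; split; auto.
  - destruct IHk as [p [Hp E]]. rewrite E.
    destruct (Nat.le_ge_cases (f p) (f (S k))).
    + exists p. split; [lia|]. apply Nat.min_l; auto.
    + exists (S k). split; [lia|]. apply Nat.min_r; auto.
Qed.

Lemma INR_sumN k f : INR (sumN k f) = sumR k (fun i => INR (f i)).
Proof. induction k; simpl sumN; simpl sumR; [reflexivity | rewrite plus_INR, IHk; reflexivity]. Qed.

Lemma INR_b2n adj i j : INR (b2n (adj i j)) = adj_matrix adj i j.
Proof. unfold b2n, adj_matrix. destruct (adj i j); simpl; reflexivity. Qed.

Lemma deg_eq n adj p : INR (degree n adj p) = sumR n (fun j => adj_matrix adj p j).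
Proof. unfold degree. rewrite INR_sumN. apply sumR_ext; intros; apply INR_b2n. Qed.

Lemma edges_eq n adj (Hsym : forall i j, adj i j = adj j i) (Hirr : forall i, adj i i = false) :
  2 * INR (num_edges n adj) = sumR n (fun i => sumR n (fun j => adj_matrix adj i j)).
Proof.
  unfold num_edges. rewrite INR_sumN.
  rewrite (sumR_ext n _ (fun i => sumR i (fun j => adj_matrix adj i j)))
    by (intros; rewrite INR_sumN; apply sumR_ext; intros; apply INR_b2n).
  induction n.
  - simpl; ring.
  - rewrite !sumR_S.
    rewrite (sumR_ext n (fun i => sumR (S n) (fun j => adj_matrix adj i j))
                     (fun i => sumR n (fun j => adj_matrix adj i j) + adj_matrix adj n i))
      by (intros x Hx; rewrite sumR_S; unfold adj_matrix; rewrite (Hsym x n); reflexivity).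
    rewrite sumR_plus.
    assert (adj_matrix adj n n = 0) by (unfold adj_matrix; rewrite Hirr; reflexivity).
    rewrite <- IHn. change (sumR n (adj_matrix adj n)) with (sumR n (fun j => adj_matrix adj n j)). lra.
Qed.

Lemma exp_mono a b : 0 <= b -> b <= a -> exp b - b <= exp a - a.
Proof.
  intros Hb Hab.
  assert (E : exp a = exp b * exp (a - b)) by (rewrite <- exp_plus; f_equal; ring).
  pose proof (exp_ineq1_le (a - b)).
  pose proof (exp_ineq1_le b).
  nra.
Qed.

Theorem mainTheorem5 (n : nat) (adj : nat -> nat -> bool)
  (Hn : (2 <= n)%nat)
  (Hsym : forall i j, adj i j = adj j i)
  (Hirr : forall i, adj i i = false)
  (lam : nat -> R)
  (Hspec : is_spectrum n (adj_matrix adj) lam) :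
  let t := 2 * (INR (num_edges n adj) - INR (min_degree n adj)) / (INR n - 1) in
  estrada n lam >= exp t + (INR n - 1) - t /\
  (estrada n lam = exp t + (INR n - 1) - t <->
   (forall i j, (i < n)%nat -> (j < n)%nat -> adj i j = false)).
Proof.
  intros t.
  destruct Hspec as [v [Hort Heig]].
  set (A := adj_matrix adj) in *.
  assert (Hcomp := MC.complete_on n v Hort).
  assert (Hdec : forall i j, (i < n)%nat -> (j < n)%nat ->
            sumR n (fun k => lam k * v k i * v k j) = A i j).
  { intros i j Hi Hj.
    rewrite (sumR_ext n _ (fun k => sumR n (fun l => A i l * v k l) * v k j))
      by (intros k Hk; rewrite Heig by auto; ring).
    rewrite (sumR_ext n _ (fun k => sumR n (fun l => A i l * (v k l * v k j))))
      by (intros k Hk; rewrite <- sumR_mulr; apply sumR_ext; intros; ring).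
    rewrite sumR_swap.
    rewrite (sumR_ext n _ (fun l => if Nat.eqb l j then A i l else 0)).
    - apply sumR_delta; auto.
    - intros l Hl. rewrite sumR_scal. rewrite Hcomp by auto.
      destruct (Nat.eqb l j); ring. }
  assert (HA01 : forall i j, A i j = 0 \/ A i j = 1).
  { intros; unfold A, adj_matrix; destruct (adj i j); auto. }
  assert (Htr : sumR n lam = 0).
  { rewrite (sumR_ext n lam (fun k => sumR n (fun i => lam k * v k i * v k i))).
    - rewrite sumR_swap. rewrite <- (sumR_0 n). apply sumR_ext. intros i Hi.
      rewrite Hdec by auto. unfold A, adj_matrix. rewrite Hirr. reflexivity.
    - intros k Hk. rewrite <- (Rmult_1_r (lam k)) at 1.
      replace 1 with (if Nat.eqb k k then 1 else 0) by (rewrite Nat.eqb_refl; reflexivity).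
      rewrite <- Hort by auto. rewrite <- sumR_scal. apply sumR_ext; intros; ring. }
  assert (HR : forall x : nat -> R, forall i, (i < n)%nat ->
     sumR n (fun k => sumR n (fun l => v k l * x l) * v k i) = x i).
  { intros x i Hi.
    rewrite (sumR_ext n _ (fun k => sumR n (fun l => x l * (v k l * v k i))))
      by (intros; rewrite <- sumR_mulr; apply sumR_ext; intros; ring).
    rewrite sumR_swap.
    rewrite (sumR_ext n _ (fun l => if Nat.eqb l i then x l else 0)).
    - apply sumR_delta; auto.
    - intros l Hl. rewrite sumR_scal, Hcomp by auto. destruct (Nat.eqb l i); ring. }
  assert (HN : forall x : nat -> R,
     sumR n (fun k => sumR n (fun l => v k l * x l) * sumR n (fun l => v k l * x l))
     = sumR n (fun i => x i * x i)).
  { intros x.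
    rewrite (sumR_ext n _ (fun k => sumR n (fun i => sumR n (fun l => v k l * x l) * v k i * x i)))
      by (intros; rewrite <- sumR_scal; apply sumR_ext; intros; ring).
    rewrite sumR_swap. apply sumR_ext. intros i Hi.
    rewrite sumR_mulr, HR by auto. ring. }
  assert (HQ : forall x : nat -> R,
     sumR n (fun k => lam k * sumR n (fun l => v k l * x l) * sumR n (fun l => v k l * x l))
     = sumR n (fun i => sumR n (fun j => A i j * x i * x j))).
  { intros x.
    rewrite (sumR_ext n _ (fun k => sumR n (fun i => sumR n (fun j =>
               (sumR n (fun l => v k l * x l) * v k j) * (A i j * x i))))).
    - rewrite sumR_swap. apply sumR_ext. intros i Hi.
      rewrite sumR_swap. apply sumR_ext. intros j Hj.
      rewrite sumR_mulr, HR by auto. ring.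
    - intros k Hk.
      set (c := sumR n (fun l => v k l * x l)).
      symmetry.
      rewrite (sumR_ext n _ (fun i => (c * lam k) * (v k i * x i))).
      + rewrite sumR_scal. unfold c at 3. ring.
      + intros i Hi.
        rewrite (sumR_ext n _ (fun j => (c * x i) * (A i j * v k j))) by (intros; ring).
        rewrite sumR_scal, Heig by auto. ring. }
  destruct (argmax_ex n lam ltac:(lia)) as [p [Hp Hpmax]].
  assert (HRay : forall x : nat -> R,
     sumR n (fun i => sumR n (fun j => A i j * x i * x j)) <= lam p * sumR n (fun i => x i * x i)).
  { intros x. rewrite <- HQ, <- HN, <- sumR_scal. apply sumR_le. intros k Hk.
    specialize (Hpmax k Hk). set (c := sumR n (fun l => v k l * x l)).
    assert (0 <= c * c) by nra. nra. }
  destruct (minN_ex (n-1) (degree n adj)) as [q [Hq Hqmin]].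
  assert (Hqn : (q < n)%nat) by lia.
  assert (Hdelta : INR (min_degree n adj) = sumR n (fun j => A q j)).
  { unfold min_degree. rewrite Hqmin. apply deg_eq. }
  assert (Hm : 2 * INR (num_edges n adj) = sumR n (fun i => sumR n (fun j => A i j)))
    by (apply edges_eq; auto).
  set (x := fun i => if Nat.eqb i q then 0 else 1).
  assert (Hx01 : forall i, 0 <= x i /\ x i <= 1).
  { intros i; unfold x; destruct (Nat.eqb i q); lra. }
  assert (Hxx : sumR n (fun i => x i * x i) = INR n - 1).
  { rewrite (sumR_ext n _ (fun i => 1 + (-1) * (if Nat.eqb i q then 1 else 0))).
    - rewrite sumR_plus, sumR_scal, sumR_1, (sumR_delta n q (fun _ => 1)) by auto. ring.
    - intros i _; unfold x; destruct (Nat.eqb i q); ring. }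
  set (r := fun i => sumR n (fun j => A i j * x j)).
  assert (Hr : forall i, r i = sumR n (fun j => A i j) - A i q).
  { intros i. unfold r.
    rewrite (sumR_ext n _ (fun j => A i j + (-1) * (if Nat.eqb j q then A i j else 0))).
    - rewrite sumR_plus, sumR_scal, sumR_delta by auto. change (sumR n (A i)) with (sumR n (fun j => A i j)). ring.
    - intros j _; unfold x; destruct (Nat.eqb j q); ring. }
  assert (Hxq : sumR n (fun i => sumR n (fun j => A i j * x i * x j))
                = 2 * INR (num_edges n adj) - 2 * INR (min_degree n adj)).
  { rewrite (sumR_ext n _ (fun i => r i + (-1) * (if Nat.eqb i q then r i else 0))).
    - rewrite sumR_plus, sumR_scal, sumR_delta by auto.
      rewrite (sumR_ext n r (fun i => sumR n (fun j => A i j) + (-1) * A q i)).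
      + rewrite sumR_plus, sumR_scal, Hr, Hm, Hdelta.
        assert (A q q = 0) by (unfold A, adj_matrix; rewrite Hirr; reflexivity).
        change (sumR n (A q)) with (sumR n (fun j => A q j)). lra.
      + intros i _. rewrite Hr. unfold A, adj_matrix. rewrite (Hsym i q). ring.
    - intros i _. unfold r.
      rewrite (sumR_ext n _ (fun j => x i * (A i j * x j))) by (intros; ring).
      rewrite sumR_scal. unfold x at 1. destruct (Nat.eqb i q); ring. }
  assert (Hx0 : 0 <= sumR n (fun i => sumR n (fun j => A i j * x i * x j))).
  { apply sumR_nonneg. intros i _. apply sumR_nonneg.
    intros j _. destruct (Hx01 i), (Hx01 j). destruct (HA01 i j) as [-> | ->]; nra. }
  assert (HRx := HRay x). rewrite Hxx, Hxq in HRx. rewrite Hxq in Hx0.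
  assert (HnR : 2 <= INR n) by (replace 2 with (INR 2) by (simpl; ring); apply le_INR; auto).
  assert (Ht : t * (INR n - 1) = 2 * INR (num_edges n adj) - 2 * INR (min_degree n adj))
    by (unfold t; field; lra).
  assert (Htp : t <= lam p) by nra.
  assert (Ht0 : 0 <= t) by nra.
  set (D := sumR n (fun k => if Nat.eqb k p then 0 else exp (lam k) - 1 - lam k)).
  assert (HD0 : 0 <= D).
  { unfold D. apply sumR_nonneg. intros k _.
    cbv beta. destruct (Nat.eqb k p); [lra|]. pose proof (exp_ineq1_le (lam k)). lra. }
  assert (Hest : estrada n lam = exp (lam p) + (INR n - 1) - lam p + D).
  { unfold estrada.
    rewrite (sumR_ext n (fun k => exp (lam k)) (fun k => (1 + lam k + (-1) * (if Nat.eqb k p then 1 + lam k - exp (lam k) else 0)) + (if Nat.eqb k p then 0 else exp (lam k) - 1 - lam k)))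
      by (intros k _; destruct (Nat.eqb k p); ring).
    rewrite !sumR_plus, sumR_scal, sumR_1.
    rewrite (sumR_delta n p (fun k => 1 + lam k - exp (lam k))) by auto.
    change (sumR n (fun k => lam k)) with (sumR n lam). rewrite Htr. fold D. ring. }
  pose proof (exp_mono (lam p) t Ht0 Htp) as Hmono.
  split; [lra|].
  split.
  - intro E.
    assert (HD : D = 0) by lra.
    assert (Hz' : forall k, (k < n)%nat -> k <> p -> lam k = 0).
    { intros k Hk Hkp.
      assert (Hk0 : (fun k => if Nat.eqb k p then 0 else exp (lam k) - 1 - lam k) k = 0).
      { refine (sumR_ge0_eq0 n (fun k => if Nat.eqb k p then 0 else exp (lam k) - 1 - lam k) _ HD k Hk).
        intros i _; cbv beta; destruct (Nat.eqb i p); [lra|]; pose proof (exp_ineq1_le (lam i)); lra. }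
      simpl in Hk0. destruct (Nat.eqb_spec k p); [contradiction|].
      destruct (Req_dec (lam k) 0) as [|ne]; auto.
      pose proof (exp_ineq1 _ ne). lra. }
    assert (Hz : forall k, (k < n)%nat -> lam k = 0).
    { assert (lam p = 0).
      { rewrite (sumR_split n p) in Htr by auto.
        rewrite (sumR_ext n _ (fun _ => 0)) in Htr.
        - rewrite sumR_0 in Htr. lra.
        - intros k Hk. destruct (Nat.eqb_spec k p); auto. }
      intros k Hk. destruct (Nat.eq_dec k p) as [->|]; auto. }
    intros i j Hi Hj.
    pose proof (Hdec i j Hi Hj) as Hij.
    rewrite (sumR_ext n _ (fun _ => 0)) in Hij by (intros k Hk; rewrite Hz by auto; ring).
    rewrite sumR_0 in Hij. unfold A, adj_matrix in Hij. destruct (adj i j); [lra|auto].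
  - intro H0.
    assert (HA0 : forall i j, (i < n)%nat -> (j < n)%nat -> A i j = 0).
    { intros i j Hi Hj. unfold A, adj_matrix. rewrite H0; auto. }
    assert (Hz : forall k, (k < n)%nat -> lam k = 0).
    { intros k Hk.
      pose proof (Hort k k Hk Hk) as Hkk. rewrite Nat.eqb_refl in Hkk.
      rewrite <- (Rmult_1_r (lam k)), <- Hkk, <- sumR_scal.
      rewrite (sumR_ext n _ (fun i => v k i * (lam k * v k i))) by (intros; ring).
      rewrite <- (sumR_0 n). apply sumR_ext. intros i Hi.
      rewrite <- Heig by auto.
      rewrite (sumR_ext n _ (fun _ => 0)) by (intros j Hj; rewrite HA0 by auto; ring).
      rewrite sumR_0; ring. }
    assert (Hm0 : INR (num_edges n adj) = 0).
    { rewrite (sumR_ext n _ (fun _ => 0)) in Hm.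
      - rewrite sumR_0 in Hm. lra.
      - intros i Hi. rewrite (sumR_ext n _ (fun _ => 0)) by (intros; apply HA0; auto). apply sumR_0. }
    assert (Hd0 : INR (min_degree n adj) = 0).
    { rewrite Hdelta. rewrite (sumR_ext n _ (fun _ => 0)) by (intros; apply HA0; auto). apply sumR_0. }
    assert (Htz : t = 0) by (unfold t; rewrite Hm0, Hd0; field; lra).
    rewrite Htz, exp_0. unfold estrada.
    rewrite (sumR_ext n _ (fun _ => 1)) by (intros k Hk; rewrite Hz, exp_0 by auto; reflexivity).
    rewrite sumR_1. ring.
Qed.
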